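(* The Cut Rule \[ \frac{\Gamma_1\Rightarrow \phi \qquad \Gamma_2,\phi \Rightarrow \Delta}{\Gamma_1,\Gamma_2 \Rightarrow \Delta} \] is admissible in the sequent calculus $\mathsf{G3iLL}$; that is, for all finite multisets of formulas $\Gamma_1,\Gamma_2$, every formula $\phi$ and every multiset $\Delta$ containing at most one formula, if $\Gamma_1\Rightarrow\phi$ and $\Gamma_2,\phi\Rightarrow\Delta$ are derivable in $\mathsf{G3iLL}$, then $\Gamma_1,\Gamma_2\Rightarrow\Delta$ is derivable in $\mathsf{G3iLL}$.
   Context: Formulas of the language of propositional Lax Logic are built from the constant $\bot$ and propositional atoms $p,q,\dots$ (with $\bot$ not an atom) using the binary connectives $\wedge,\vee,\to$ and a unary modal operator $\bigcirc$. A sequent is an expression $\Gamma\Rightarrow\Delta$ with $\Gamma,\Delta$ finite multisets of formulas and $\Delta$ containing at most one formula; $\Gamma,\Pi$ denotes multiset union. The calculus $\mathsf{G3iLL}$ has the axioms $\Gamma,p\Rightarrow p$ ($p$ an atom) and $\Gamma,\bot\Rightarrow\Delta$, and the rules (premisses / conclusion): $R\wedge$: $\Gamma\Rightarrow\phi$ and $\Gamma\Rightarrow\psi$ / $\Gamma\Rightarrow\phi\wedge\psi$; $L\wedge$: $\Gamma,\phi,\psi\Rightarrow\Delta$ / $\Gamma,\phi\wedge\psi\Rightarrow\Delta$; $R\vee$: $\Gamma\Rightarrow\phi_i$ / $\Gamma\Rightarrow\phi_0\vee\phi_1$ ($i=0,1$); $L\vee$: $\Gamma,\phi\Rightarrow\Delta$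 and $\Gamma,\psi\Rightarrow\Delta$ / $\Gamma,\phi\vee\psi\Rightarrow\Delta$; $R\to$: $\Gamma,\phi\Rightarrow\psi$ / $\Gamma\Rightarrow\phi\to\psi$; $L\to$: $\Gamma,\phi\to\psi\Rightarrow\phi$ and $\Gamma,\psi\Rightarrow\Delta$ / $\Gamma,\phi\to\psi\Rightarrow\Delta$; $R\bigcirc$: $\Gamma\Rightarrow\phi$ / $\Gamma\Rightarrow\bigcirc\phi$; $L\bigcirc$: $\Gamma,\psi\Rightarrow\bigcirc\phi$ / $\Gamma,\bigcirc\psi\Rightarrow\bigcirc\phi$. *)

(* Defs.v *)
From Stdlib Require Import List Permutation.
Import ListNotations.

Inductive form : Type :=
| Var : nat -> form
| Bot : form
| And : form -> form -> form
| Or  : form -> form -> form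
| Imp : form -> form -> form
| Circ : form -> form.

(* A sequent Gamma => Delta: Gamma a finite multiset (a list taken up to
   permutation, see [G3iLL_perm]); Delta has at most one formula (an option). *)
Inductive G3iLL : list form -> option form -> Prop :=
| G_perm : forall G G' D, Permutation G G' -> G3iLL G D -> G3iLL G' D
| G_ax   : forall G p, G3iLL (Var p :: G) (Some (Var p))
| G_bot  : forall G D, G3iLL (Bot :: G) D
| G_Rand : forall G a b, G3iLL G (Some a) -> G3iLL G (Some b) -> G3iLL G (Some (And a b))
| G_Land : forall G a b D, G3iLL (a :: b :: G) D -> G3iLL (And a b :: G) D
| G_Ror0 : forall G a b, G3iLL G (Some a) -> G3iLL G (Some (Or a b))
| G_Ror1 : forall G a b, G3iLL G (Some b) -> G3iLL G (Some (Or a b))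
| G_Lor  : forall G a b D, G3iLL (a :: G) D -> G3iLL (b :: G) D -> G3iLL (Or a b :: G) D
| G_Rimp : forall G a b, G3iLL (a :: G) (Some b) -> G3iLL G (Some (Imp a b))
| G_Limp : forall G a b D, G3iLL (Imp a b :: G) (Some a) -> G3iLL (b :: G) D ->
             G3iLL (Imp a b :: G) D
| G_Rcirc : forall G a, G3iLL G (Some a) -> G3iLL G (Some (Circ a))
| G_Lcirc : forall G a b, G3iLL (b :: G) (Some (Circ a)) -> G3iLL (Circ b :: G) (Some (Circ a)).

(* Main.v *)
Require Import Defs.
From Stdlib Require Import List Permutation Lia Arith.
Import ListNotations.

Definition form_eq_dec : forall x y : form, {x = y} + {x <> y}.
Proof. decide equality; apply PeanoNat.Nat.eq_dec. Qed.

Ltac pcount :=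
  repeat match goal with H : Permutation _ _ |- _ =>
    rewrite (Permutation_count_occ form_eq_dec) in H end;
  apply (Permutation_count_occ form_eq_dec);
  let y := fresh "y" in intro y;
  repeat match goal with H : forall x : form, count_occ _ _ x = count_occ _ _ x |- _ =>
    specialize (H y); revert H end;
  simpl; rewrite ?count_occ_app; simpl;
  repeat match goal with |- context [form_eq_dec ?a ?b] => destruct (form_eq_dec a b) end;
  intros; try congruence; lia.

Ltac icount :=
  repeat match goal with H : Permutation _ _ |- _ =>
    rewrite (Permutation_count_occ form_eq_dec) in H end;
  repeat match goal with H : In _ _ |- _ =>
    rewrite (count_occ_In form_eq_dec) in H end;
  rewrite (count_occ_In form_eq_dec);
  repeat match goal with H : forall x : form, count_occ _ _ x = count_occ _ _ x |- _ =>
    match goal with |- context [count_occ _ _ ?y] => specialize (H y); revert H end end;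
  repeat match goal with H : count_occ _ _ _ > 0 |- _ => revert H end;
  simpl; rewrite ?count_occ_app; simpl;
  repeat match goal with |- context [form_eq_dec ?a ?b] => destruct (form_eq_dec a b) end;
  intros; try congruence; lia.

Inductive Hd : nat -> list form -> option form -> Prop :=
| H_ax : forall n G p, In (Var p) G -> Hd n G (Some (Var p))
| H_bot : forall n G D, In Bot G -> Hd n G D
| H_Rand : forall n G a b, Hd n G (Some a) -> Hd n G (Some b) -> Hd (S n) G (Some (And a b))
| H_Land : forall n G G' a b D, Permutation G (And a b :: G') -> Hd n (a::b::G') D -> Hd (S n) G D
| H_Ror0 : forall n G a b, Hd n G (Some a) -> Hd (S n) G (Some (Or a b))
| H_Ror1 : forall n G a b, Hd n G (Some b) -> Hd (S n) G (Some (Or a b))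
| H_Lor : forall n G G' a b D, Permutation G (Or a b :: G') -> Hd n (a::G') D -> Hd n (b::G') D -> Hd (S n) G D
| H_Rimp : forall n G a b, Hd n (a::G) (Some b) -> Hd (S n) G (Some (Imp a b))
| H_Limp : forall n G G' a b D, Permutation G (Imp a b :: G') -> Hd n G (Some a) -> Hd n (b::G') D -> Hd (S n) G D
| H_Rcirc : forall n G a, Hd n G (Some a) -> Hd (S n) G (Some (Circ a))
| H_Lcirc : forall n G G' a b, Permutation G (Circ b :: G') -> Hd n (b::G') (Some (Circ a)) -> Hd (S n) G (Some (Circ a)).

Lemma mono : forall n G D, Hd n G D -> forall m, n <= m -> Hd m G D.
Proof.
  induction 1; intros m Hm;
  try (destruct m as [|m]; [lia|]);
  try solve [econstructor; eauto with arith].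
Qed.

Lemma hperm : forall n G D, Hd n G D -> forall G', Permutation G G' -> Hd n G' D.
Proof.
  induction 1; intros G2 HP.
  - apply H_ax. eapply Permutation_in; eauto.
  - apply H_bot. eapply Permutation_in; eauto.
  - apply H_Rand; auto.
  - apply H_Land with (G' := G') (a:=a) (b:=b); [|exact H0]. eapply perm_trans; [apply Permutation_sym; exact HP| exact H].
  - apply H_Ror0; auto.
  - apply H_Ror1; auto.
  - apply H_Lor with (G' := G') (a:=a) (b:=b); [|exact H0|exact H1]. eapply perm_trans; [apply Permutation_sym; exact HP| exact H].
  - apply H_Rimp; apply IHHd; apply perm_skip; auto.
  - apply H_Limp with (G' := G') (a:=a) (b:=b); [|apply IHHd1; exact HP|exact H1]. eapply perm_trans; [apply Permutation_sym; exact HP| exact H].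
  - apply H_Rcirc; auto.
  - apply H_Lcirc with (G' := G') (b:=b); [|exact H0]. eapply perm_trans; [apply Permutation_sym; exact HP| exact H].
Qed.

Lemma weak : forall n G D, Hd n G D -> forall x, Hd n (x::G) D.
Proof.
  induction 1; intros x.
  - apply H_ax. simpl; auto.
  - apply H_bot. simpl; auto.
  - apply H_Rand; auto.
  - eapply H_Land with (G' := x :: G') (a:=a) (b:=b); [pcount|]. eapply hperm; [apply (IHHd x)|pcount].
  - apply H_Ror0; auto.
  - apply H_Ror1; auto.
  - eapply H_Lor with (G' := x :: G') (a:=a) (b:=b); [pcount| |]; [eapply hperm; [apply (IHHd1 x)|pcount] | eapply hperm; [apply (IHHd2 x)|pcount]].
  - apply H_Rimp. eapply hperm; [apply (IHHd x)|pcount].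
  - eapply H_Limp with (G' := x :: G') (a:=a) (b:=b); [pcount|auto|]. eapply hperm; [apply (IHHd2 x)|pcount].
  - apply H_Rcirc; auto.
  - eapply H_Lcirc with (G' := x :: G') (b:=b); [pcount|]. eapply hperm; [apply (IHHd x)|pcount].
Qed.

Lemma weakL : forall X n G D, Hd n G D -> Hd n (X ++ G) D.
Proof. induction X; simpl; intros; auto. apply weak; auto. Qed.

Lemma split_perm : forall (x : form) G C G2, Permutation (x::G) (C::G2) ->
  (x = C /\ Permutation G G2) \/ (exists G3, Permutation G (C::G3) /\ Permutation G2 (x::G3)).
Proof.
  intros x G C G2 HP.
  assert (Hin : In C (x::G)) by (eapply Permutation_in; [apply Permutation_sym; eauto| left; auto]).
  destruct Hin as [E|Hin].
  - subst. left. split; auto. eapply Permutation_cons_inv; eauto.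
  - right. apply in_split in Hin. destruct Hin as [l1 [l2 E]]. subst.
    exists (l1 ++ l2). split; pcount.
Qed.

Lemma bot_lemma : forall n G E, Hd n G E -> E = Some Bot -> forall D, Hd n G D.
Proof.
  induction 1; intros HE D0; try discriminate.
  - apply H_bot; auto.
  - eapply H_Land; eauto.
  - eapply H_Lor; eauto.
  - eapply H_Limp; eauto.
Qed.

Lemma inv_gen (A : form) (B : list form)
  (HnV : forall p, A <> Var p) (HnB : A <> Bot)
  (Hand : forall c d, A = And c d -> B = [c;d])
  (Hor : forall c d, A = Or c d -> B = [c] \/ B = [d])
  (Himp : forall c d, A = Imp c d -> B = [d])
  (Hcirc : forall c, A = Circ c -> B = [c]) :
  forall n G D, Hd n G D -> forall G', Permutation G (A::G') -> Hd n (B++G') D.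
Proof.
  induction 1; intros G2 HP.
  - apply H_ax. apply in_or_app; right.
    assert (Hi : In (Var p) (A::G2)) by (eapply Permutation_in; eauto).
    destruct Hi as [E|Hi]; [exfalso; eapply HnV; eauto|auto].
  - apply H_bot. apply in_or_app; right.
    assert (Hi : In Bot (A::G2)) by (eapply Permutation_in; eauto).
    destruct Hi as [E|Hi]; [exfalso; eapply HnB; eauto|auto].
  - apply H_Rand; auto.
  - assert (HQ : Permutation (A::G2) (And a b :: G')) by (eapply perm_trans; [apply Permutation_sym; eauto|eauto]).
    destruct (split_perm _ _ _ _ HQ) as [[E HQ2]|[G3 [HQ2 HQ3]]].
    + rewrite (Hand a b E). simpl. apply mono with n; [|lia].
      eapply hperm; [eauto|]. pcount.
    + assert (IH := IHHd (a::b::G3) ltac:(pcount)).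
      apply H_Land with (G' := B ++ G3) (a:=a) (b:=b); [pcount|].
      eapply hperm; [exact IH|pcount].
  - apply H_Ror0; auto.
  - apply H_Ror1; auto.
  - assert (HQ : Permutation (A::G2) (Or a b :: G')) by (eapply perm_trans; [apply Permutation_sym; eauto|eauto]).
    destruct (split_perm _ _ _ _ HQ) as [[E HQ2]|[G3 [HQ2 HQ3]]].
    + destruct (Hor a b E) as [E2|E2]; rewrite E2; simpl; apply mono with n; try lia.
      * eapply hperm; [exact H0|pcount].
      * eapply hperm; [exact H1|pcount].
    + assert (IH1 := IHHd1 (a::G3) ltac:(pcount)).
      assert (IH2 := IHHd2 (b::G3) ltac:(pcount)).
      apply H_Lor with (G' := B ++ G3) (a:=a) (b:=b); [pcount| |].
      * eapply hperm; [exact IH1|pcount].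
      * eapply hperm; [exact IH2|pcount].
  - apply H_Rimp. assert (IH := IHHd (a::G2) ltac:(pcount)).
    eapply hperm; [exact IH|pcount].
  - assert (HQ : Permutation (A::G2) (Imp a b :: G')) by (eapply perm_trans; [apply Permutation_sym; eauto|eauto]).
    destruct (split_perm _ _ _ _ HQ) as [[E HQ2]|[G3 [HQ2 HQ3]]].
    + rewrite (Himp a b E). simpl. apply mono with n; [|lia].
      eapply hperm; [eauto|]. pcount.
    + assert (IH1 := IHHd1 G2 HP).
      assert (IH2 := IHHd2 (b::G3) ltac:(pcount)).
      apply H_Limp with (G' := B ++ G3) (a:=a) (b:=b); [pcount|exact IH1|].
      eapply hperm; [exact IH2|pcount].
  - apply H_Rcirc; auto.
  - assert (HQ : Permutation (A::G2) (Circ b :: G')) by (eapply perm_trans; [apply Permutation_sym; eauto|eauto]).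
    destruct (split_perm _ _ _ _ HQ) as [[E HQ2]|[G3 [HQ2 HQ3]]].
    + rewrite (Hcirc b E). simpl. apply mono with n; [|lia].
      eapply hperm; [eauto|]. pcount.
    + assert (IH := IHHd (b::G3) ltac:(pcount)).
      apply H_Lcirc with (G' := B ++ G3) (b:=b); [pcount|].
      eapply hperm; [exact IH|pcount].
Qed.

Lemma inv_and : forall n G D a b G', Hd n G D -> Permutation G (And a b :: G') -> Hd n (a::b::G') D.
Proof. intros. apply (inv_gen (And a b) [a;b]) with (G:=G); auto; intros; try congruence;
  match goal with E : _ = _ |- _ => injection E; intros; subst; auto end. Qed.
Lemma inv_or0 : forall n G D a b G', Hd n G D -> Permutation G (Or a b :: G') -> Hd n (a::G') D.
Proof. intros. apply (inv_gen (Or a b) [a]) with (G:=G); auto; intros; try congruence;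
  match goal with E : _ = _ |- _ => injection E; intros; subst; auto end. Qed.
Lemma inv_or1 : forall n G D a b G', Hd n G D -> Permutation G (Or a b :: G') -> Hd n (b::G') D.
Proof. intros. apply (inv_gen (Or a b) [b]) with (G:=G); auto; intros; try congruence;
  match goal with E : _ = _ |- _ => injection E; intros; subst; auto end. Qed.
Lemma inv_imp : forall n G D a b G', Hd n G D -> Permutation G (Imp a b :: G') -> Hd n (b::G') D.
Proof. intros. apply (inv_gen (Imp a b) [b]) with (G:=G); auto; intros; try congruence;
  match goal with E : _ = _ |- _ => injection E; intros; subst; auto end. Qed.
Lemma inv_circ : forall n G D b G', Hd n G D -> Permutation G (Circ b :: G') -> Hd n (b::G') D.
Proof. intros. apply (inv_gen (Circ b) [b]) with (G:=G); auto; intros; try congruence;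
  match goal with E : _ = _ |- _ => injection E; intros; subst; auto end. Qed.

Fixpoint fsize (f : form) : nat :=
  match f with
  | Var _ | Bot => 1
  | And a b | Or a b | Imp a b => S (fsize a + fsize b)
  | Circ a => S (fsize a)
  end.

Definition CutP phi := forall n m G R D, Hd n G (Some phi) -> Hd m R D ->
  Permutation R (phi::G) -> exists k, Hd k G D.
Definition CutB phi s := forall n m G R D, n + m < s -> Hd n G (Some phi) -> Hd m R D ->
  Permutation R (phi::G) -> exists k, Hd k G D.

Lemma lc_and phi s n m G G' c d R D : CutB phi s -> n + m < s -> Permutation G (And c d::G') ->
  Hd n (c::d::G') (Some phi) -> Hd m R D -> Permutation R (phi::G) -> exists k, Hd k G D.
Proof.
  intros IH Hlt HG Hl Hr HR.
  assert (Hr' : Hd m (c::d::phi::G') D) by (apply inv_and with (G:=R); [exact Hr| pcount]).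
  destruct (IH n m (c::d::G') _ D Hlt Hl Hr' ltac:(pcount)) as [k Hk].
  exists (S k). eapply H_Land; eauto.
Qed.

Lemma lc_or phi s n m G G' c d R D : CutB phi s -> n + m < s -> Permutation G (Or c d::G') ->
  Hd n (c::G') (Some phi) -> Hd n (d::G') (Some phi) -> Hd m R D -> Permutation R (phi::G) -> exists k, Hd k G D.
Proof.
  intros IH Hlt HG Hl1 Hl2 Hr HR.
  assert (Hr1 : Hd m (c::phi::G') D) by (apply inv_or0 with (G:=R) (b:=d); [exact Hr| pcount]).
  assert (Hr2 : Hd m (d::phi::G') D) by (apply inv_or1 with (G:=R) (a:=c); [exact Hr| pcount]).
  destruct (IH n m (c::G') _ D Hlt Hl1 Hr1 ltac:(pcount)) as [k1 Hk1].
  destruct (IH n m (d::G') _ D Hlt Hl2 Hr2 ltac:(pcount)) as [k2 Hk2].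
  exists (S (max k1 k2)). eapply H_Lor; [eauto| |]; eapply mono; eauto; lia.
Qed.

Lemma lc_imp phi s n m G G' c d R D : CutB phi s -> n + m < s -> Permutation G (Imp c d::G') ->
  Hd n G (Some c) -> Hd n (d::G') (Some phi) -> Hd m R D -> Permutation R (phi::G) -> exists k, Hd k G D.
Proof.
  intros IH Hlt HG Hl1 Hl2 Hr HR.
  assert (Hr2 : Hd m (d::phi::G') D) by (apply inv_imp with (G:=R) (a:=c); [exact Hr| pcount]).
  destruct (IH n m (d::G') _ D Hlt Hl2 Hr2 ltac:(pcount)) as [k2 Hk2].
  exists (S (max n k2)). eapply H_Limp; [eauto| |]; eapply mono; eauto; lia.
Qed.

Lemma lc_circ a s n m G G' b R e : CutB (Circ a) s -> n + m < s -> Permutation G (Circ b::G') ->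
  Hd n (b::G') (Some (Circ a)) -> Hd m R (Some (Circ e)) -> Permutation R (Circ a::G) ->
  exists k, Hd k G (Some (Circ e)).
Proof.
  intros IH Hlt HG Hl Hr HR.
  assert (Hr' : Hd m (b::Circ a::G') (Some (Circ e))) by (apply inv_circ with (G:=R); [exact Hr| pcount]).
  destruct (IH n m (b::G') _ _ Hlt Hl Hr' ltac:(pcount)) as [k Hk].
  exists (S k). eapply H_Lcirc; eauto.
Qed.

Lemma pr_and s a b : CutP a -> CutP b -> CutB (And a b) s ->
  forall n G E, Hd n G E -> E = Some (And a b) -> forall m R R' D, n + S m < S s ->
  Hd (S m) R D -> Permutation R (And a b :: G) -> Hd m (a::b::R') D -> Permutation R' G ->
  exists k, Hd k G D.
Proof.
  intros Ha Hb IH n G E Hl; destruct Hl; intros HE m R R' D0 Hlt Hr HR H1 HR'; try discriminate.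
  - exists 0. apply H_bot; auto.
  - injection HE; intros; subst.
    destruct (Ha n m (b::G) (a::b::R') D0 (weak _ _ _ Hl1 b) H1 ltac:(pcount)) as [k1 Hk1].
    destruct (Hb n k1 G (b::G) D0 Hl2 Hk1 ltac:(pcount)) as [k Hk]. eauto.
  - subst. eapply lc_and; [exact IH| |exact H|exact Hl|exact Hr|exact HR]; lia.
  - subst. eapply lc_or; [exact IH| |exact H|exact Hl1|exact Hl2|exact Hr|exact HR]; lia.
  - subst. eapply lc_imp; [exact IH| |exact H|exact Hl1|exact Hl2|exact Hr|exact HR]; lia.
Qed.

Lemma pr_or s a b : CutP a -> CutP b -> CutB (Or a b) s ->
  forall n G E, Hd n G E -> E = Some (Or a b) -> forall m R R' D, n + S m < S s ->
  Hd (S m) R D -> Permutation R (Or a b :: G) -> Hd m (a::R') D -> Hd m (b::R') D -> Permutation R' G ->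
  exists k, Hd k G D.
Proof.
  intros Ha Hb IH n G E Hl; destruct Hl; intros HE m R R' D0 Hlt Hr HR H1 H2 HR'; try discriminate.
  - exists 0. apply H_bot; auto.
  - subst. eapply lc_and; [exact IH| |exact H|exact Hl|exact Hr|exact HR]; lia.
  - injection HE; intros; subst.
    destruct (Ha n m G (a::R') D0 Hl H1 ltac:(pcount)) as [k Hk]. eauto.
  - injection HE; intros; subst.
    destruct (Hb n m G (b::R') D0 Hl H2 ltac:(pcount)) as [k Hk]. eauto.
  - subst. eapply lc_or; [exact IH| |exact H|exact Hl1|exact Hl2|exact Hr|exact HR]; lia.
  - subst. eapply lc_imp; [exact IH| |exact H|exact Hl1|exact Hl2|exact Hr|exact HR]; lia.
Qed.

Lemma pr_imp s a b : CutP a -> CutP b -> CutB (Imp a b) s ->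
  forall n G E, Hd n G E -> Hd n G E -> E = Some (Imp a b) -> forall m R R' D, n + S m < S s ->
  Hd (S m) R D -> Permutation R (Imp a b :: G) -> Hd m R (Some a) -> Hd m (b::R') D -> Permutation R' G ->
  exists k, Hd k G D.
Proof.
  intros Ha Hb IH n G E Hl; destruct Hl; intros Hl0 HE m R R' D0 Hlt Hr HR H1 H2 HR'; try discriminate.
  - exists 0. apply H_bot; auto.
  - subst. eapply lc_and; [exact IH| |exact H|exact Hl|exact Hr|exact HR]; lia.
  - subst. eapply lc_or; [exact IH| |exact H|exact Hl1|exact Hl2|exact Hr|exact HR]; lia.
  - injection HE; intros; subst.
    destruct (IH (S n) m G R (Some a) ltac:(lia) Hl0 H1 HR) as [k1 Hk1].
    destruct (Ha k1 n G (a::G) (Some b) Hk1 Hl ltac:(pcount)) as [k2 Hk2].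
    destruct (Hb k2 m G (b::R') D0 Hk2 H2 ltac:(pcount)) as [k Hk]. eauto.
  - subst. eapply lc_imp; [exact IH| |exact H|exact Hl1|exact Hl2|exact Hr|exact HR]; lia.
Qed.

Lemma pr_circ s b : CutP b -> CutB (Circ b) s ->
  forall n G E, Hd n G E -> E = Some (Circ b) -> forall m R R' e, n + S m < S s ->
  Hd (S m) R (Some (Circ e)) -> Permutation R (Circ b :: G) -> Hd m (b::R') (Some (Circ e)) -> Permutation R' G ->
  exists k, Hd k G (Some (Circ e)).
Proof.
  intros Hb IH n G E Hl; destruct Hl; intros HE m R R' e Hlt Hr HR H1 HR'; try discriminate.
  - exists 0. apply H_bot; auto.
  - subst. eapply lc_and; [exact IH| |exact H|exact Hl|exact Hr|exact HR]; lia.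
  - subst. eapply lc_or; [exact IH| |exact H|exact Hl1|exact Hl2|exact Hr|exact HR]; lia.
  - subst. eapply lc_imp; [exact IH| |exact H|exact Hl1|exact Hl2|exact Hr|exact HR]; lia.
  - injection HE; intros; subst.
    destruct (Hb n m G (b::R') _ Hl H1 ltac:(pcount)) as [k Hk]. eauto.
  - injection HE; intros; subst. eapply lc_circ; [exact IH| |exact H|exact Hl|exact Hr|exact HR]; lia.
Qed.

Lemma cut_phi phi (IHf : forall psi, fsize psi < fsize phi -> CutP psi) : CutP phi.
Proof.
  assert (Hs : forall s, CutB phi s).
  { induction s as [|s IH]; intros n m G R D Hlt Hl Hr HR; [lia|].
    pose proof Hr as Hr0. revert Hlt HR Hr0. destruct Hr; intros Hlt HR Hr0.
    - assert (Hi : In (Var p) (phi::G)) by (eapply Permutation_in; eauto).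
      destruct Hi as [E|Hi].
      + subst. eauto.
      + exists 0. apply H_ax; auto.
    - assert (Hi : In Bot (phi::G)) by (eapply Permutation_in; eauto).
      destruct Hi as [E|Hi].
      + subst. exists n. eapply bot_lemma; eauto.
      + exists 0. apply H_bot; auto.
    - destruct (IH n n0 G G0 (Some a) ltac:(lia) Hl Hr1 HR) as [k1 Hk1].
      destruct (IH n n0 G G0 (Some b) ltac:(lia) Hl Hr2 HR) as [k2 Hk2].
      exists (S (max k1 k2)). apply H_Rand; eapply mono; eauto; lia.
    - assert (HQ : Permutation (phi::G) (And a b :: G')) by (eapply perm_trans; [apply Permutation_sym; eauto|eauto]).
      destruct (split_perm _ _ _ _ HQ) as [[E HQ2]|[G3 [HQ2 HQ3]]].
      + subst. exact (pr_and s a b (IHf a ltac:(simpl; lia)) (IHf b ltac:(simpl; lia)) IH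
          n G _ Hl eq_refl n0 G0 G' D Hlt Hr0 HR Hr (Permutation_sym HQ2)).
      + assert (Hl' : Hd n (a::b::G3) (Some phi)) by exact (inv_and _ _ _ a b G3 Hl HQ2).
        destruct (IH n n0 (a::b::G3) (a::b::G') D ltac:(lia) Hl' Hr ltac:(pcount)) as [k Hk].
        exists (S k). eapply H_Land; eauto.
    - destruct (IH n n0 G G0 (Some a) ltac:(lia) Hl Hr HR) as [k1 Hk1].
      exists (S k1). apply H_Ror0; auto.
    - destruct (IH n n0 G G0 (Some b) ltac:(lia) Hl Hr HR) as [k1 Hk1].
      exists (S k1). apply H_Ror1; auto.
    - assert (HQ : Permutation (phi::G) (Or a b :: G')) by (eapply perm_trans; [apply Permutation_sym; eauto|eauto]).
      destruct (split_perm _ _ _ _ HQ) as [[E HQ2]|[G3 [HQ2 HQ3]]].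
      + subst. exact (pr_or s a b (IHf a ltac:(simpl; lia)) (IHf b ltac:(simpl; lia)) IH
          n G _ Hl eq_refl n0 G0 G' D Hlt Hr0 HR Hr1 Hr2 (Permutation_sym HQ2)).
      + assert (Hl1 : Hd n (a::G3) (Some phi)) by exact (inv_or0 _ _ _ a b G3 Hl HQ2).
        assert (Hl2 : Hd n (b::G3) (Some phi)) by exact (inv_or1 _ _ _ a b G3 Hl HQ2).
        destruct (IH n n0 (a::G3) (a::G') D ltac:(lia) Hl1 Hr1 ltac:(pcount)) as [k1 Hk1].
        destruct (IH n n0 (b::G3) (b::G') D ltac:(lia) Hl2 Hr2 ltac:(pcount)) as [k2 Hk2].
        exists (S (max k1 k2)). eapply H_Lor; [eauto| |]; eapply mono; eauto; lia.
    - destruct (IH n n0 (a::G) (a::G0) (Some b) ltac:(lia) (weak _ _ _ Hl a) Hr ltac:(pcount)) as [k Hk].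
      exists (S k). apply H_Rimp; auto.
    - assert (HQ : Permutation (phi::G) (Imp a b :: G')) by (eapply perm_trans; [apply Permutation_sym; eauto|eauto]).
      destruct (split_perm _ _ _ _ HQ) as [[E HQ2]|[G3 [HQ2 HQ3]]].
      + subst. exact (pr_imp s a b (IHf a ltac:(simpl; lia)) (IHf b ltac:(simpl; lia)) IH
          n G _ Hl Hl eq_refl n0 G0 G' D Hlt Hr0 HR Hr1 Hr2 (Permutation_sym HQ2)).
      + destruct (IH n n0 G G0 (Some a) ltac:(lia) Hl Hr1 HR) as [k1 Hk1].
        assert (Hl2 : Hd n (b::G3) (Some phi)) by exact (inv_imp _ _ _ a b G3 Hl HQ2).
        destruct (IH n n0 (b::G3) (b::G') D ltac:(lia) Hl2 Hr2 ltac:(pcount)) as [k2 Hk2].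
        exists (S (max k1 k2)). eapply H_Limp; [eauto| |]; eapply mono; eauto; lia.
    - destruct (IH n n0 G G0 (Some a) ltac:(lia) Hl Hr HR) as [k1 Hk1].
      exists (S k1). apply H_Rcirc; auto.
    - assert (HQ : Permutation (phi::G) (Circ b :: G')) by (eapply perm_trans; [apply Permutation_sym; eauto|eauto]).
      destruct (split_perm _ _ _ _ HQ) as [[E HQ2]|[G3 [HQ2 HQ3]]].
      + subst. exact (pr_circ s b (IHf b ltac:(simpl; lia)) IH
          n G _ Hl eq_refl n0 G0 G' a Hlt Hr0 HR Hr (Permutation_sym HQ2)).
      + assert (Hl' : Hd n (b::G3) (Some phi)) by exact (inv_circ _ _ _ b G3 Hl HQ2).
        destruct (IH n n0 (b::G3) (b::G') _ ltac:(lia) Hl' Hr ltac:(pcount)) as [k Hk].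
        exists (S k). eapply H_Lcirc; eauto. }
  intros n m G R D Hl Hr HR. apply (Hs (S (n+m)) n m G R D); auto.
Qed.

Lemma cut_all : forall k phi, fsize phi < k -> CutP phi.
Proof.
  induction k; intros phi Hk; [lia|]. apply cut_phi. intros psi Hp. apply IHk. lia.
Qed.

Lemma to_Hd : forall G D, G3iLL G D -> exists n, Hd n G D.
Proof.
  induction 1.
  - destruct IHG3iLL as [n Hn]. exists n. eapply hperm; eauto.
  - exists 0. apply H_ax. left; auto.
  - exists 0. apply H_bot. left; auto.
  - destruct IHG3iLL1 as [n1 H1]; destruct IHG3iLL2 as [n2 H2].
    exists (S (max n1 n2)). apply H_Rand; eapply mono; eauto; lia.
  - destruct IHG3iLL as [n1 H1]. exists (S n1). eapply H_Land; [apply Permutation_refl|eauto].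
  - destruct IHG3iLL as [n1 H1]. exists (S n1). apply H_Ror0; auto.
  - destruct IHG3iLL as [n1 H1]. exists (S n1). apply H_Ror1; auto.
  - destruct IHG3iLL1 as [n1 H1]; destruct IHG3iLL2 as [n2 H2].
    exists (S (max n1 n2)). eapply H_Lor; [apply Permutation_refl| |]; eapply mono; eauto; lia.
  - destruct IHG3iLL as [n1 H1]. exists (S n1). apply H_Rimp; auto.
  - destruct IHG3iLL1 as [n1 H1]; destruct IHG3iLL2 as [n2 H2].
    exists (S (max n1 n2)). eapply H_Limp; [apply Permutation_refl| |]; eapply mono; eauto; lia.
  - destruct IHG3iLL as [n1 H1]. exists (S n1). apply H_Rcirc; auto.
  - destruct IHG3iLL as [n1 H1]. exists (S n1). eapply H_Lcirc; [apply Permutation_refl|eauto].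
Qed.

Lemma of_Hd : forall n G D, Hd n G D -> G3iLL G D.
Proof.
  induction 1.
  - apply in_split in H. destruct H as [l1 [l2 E]]. subst.
    eapply G_perm; [|apply G_ax with (G := l1 ++ l2)]. apply Permutation_middle.
  - apply in_split in H. destruct H as [l1 [l2 E]]. subst.
    eapply G_perm; [|apply G_bot with (G := l1 ++ l2)]. apply Permutation_middle.
  - apply G_Rand; auto.
  - eapply G_perm; [apply Permutation_sym; eauto|]. apply G_Land; auto.
  - apply G_Ror0; auto.
  - apply G_Ror1; auto.
  - eapply G_perm; [apply Permutation_sym; eauto|]. apply G_Lor; auto.
  - apply G_Rimp; auto.
  - eapply G_perm; [apply Permutation_sym; eauto|]. apply G_Limp; auto.
    eapply G_perm; eauto.
  - apply G_Rcirc; auto.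
  - eapply G_perm; [apply Permutation_sym; eauto|]. apply G_Lcirc; auto.
Qed.

Theorem mainTheorem1 (G1 G2 : list form) (phi : form) (D : option form) :
  G3iLL G1 (Some phi) -> G3iLL (phi :: G2) D -> G3iLL (G1 ++ G2) D.
Proof.
  intros H1 H2.
  destruct (to_Hd _ _ H1) as [n Hn]. destruct (to_Hd _ _ H2) as [m Hm].
  assert (Hn' : Hd n (G1 ++ G2) (Some phi)).
  { eapply hperm; [apply (weakL G2 _ _ _ Hn)|]. apply Permutation_app_comm. }
  assert (Hm' : Hd m (G1 ++ phi :: G2) D) by (apply weakL; auto).
  destruct (cut_all (S (fsize phi)) phi ltac:(lia) n m (G1 ++ G2) _ D Hn' Hm') as [k Hk].
  - apply Permutation_sym, Permutation_middle.
  - eapply of_Hd; eauto.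
Qed.
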